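(* Let $\mathcal{G}=\langle S,A,T,s_0,F\rangle$ be a two-player turn-based deterministic reachability game. For every subset $Z\subseteq\mathrm{Win}_2(\mathcal{G},F)\setminus F$, we have $\mathrm{DSWin}_1(Z,\emptyset)\subseteq\mathrm{DSWin}_1(\emptyset,Z)$.
   Context: A two-player turn-based deterministic reachability game is a tuple $\mathcal{G}=\langle S,A,T,s_0,F\rangle$: $S$ finite, partitioned into P1 states $S_1$ and P2 states $S_2$; $A=A_1\cup A_2$ (P1 and P2 actions); $T:(S_1\times A_1)\cup(S_2\times A_2)\to S$ deterministic, possibly partial ($a$ enabled at $s$ iff $T(s,a)$ defined; every state has an enabled action); $s_0$ initial; $F\subseteq S$ a set of sink states (P2's goal). For a target $R\subseteq S$: $Z_0=R$, $Z_{k+1}=Z_k\cup\{s\in S_1:T(s,a)\in Z_k\ \forall\text{ enabled }a\}\cup\{s\in S_2:T(s,a)\in Z_k\text{ for some enabled }a\}$; $\mathrm{Win}_2(\mathcal{G},R)=\bigcup_kZ_k$; $\mathrm{rank}_{\mathcal{G},R}(s)=\min\{k:s\in Z_k\}$ ($\infty$ if none). For disjoint $X,Y\subseteq\mathrm{Win}_2(\mathcal{G},F)\setminus F$ (traps $X$, fake targets $Y$): the true game $\mathcal{G}^1_{X,Y}$ has states $S$, transitions $T_{X,Y}(q,a)=T(q,a)$ if $q\notin X\cup Y$ and $T_{X,Y}(q,a)=q$ if $q\in X\cup Y$; P2's perceptual game $\mathcal{G}^2_{X,Y}$ has transitions $T$ and goal $F\cup Y$, with $\mathrm{rank}_{\mathcal{G}^2_{X,Y}}:=\mathrm{rank}_{\mathcal{G},F\cup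 Y}$. Subjectively rationalizable actions: for $q\in S_2\cap\mathrm{Win}_2(\mathcal{G},F)\setminus(F\cup Y)$, $\mathsf{SRActs}_{X,Y}(q)=\{a\text{ enabled}:\mathrm{rank}_{\mathcal{G}^2_{X,Y}}(T(q,a))<\mathrm{rank}_{\mathcal{G}^2_{X,Y}}(q)\}$; at every other state, all enabled actions. A memoryless deterministic strategy of either player is subjectively rationalizable if it picks an action in $\mathsf{SRActs}_{X,Y}(q)$ at each of that player's states $q$. A memoryless deterministic P1 strategy $\pi_1$ is stealthy deceptive sure winning at $s$ if it is subjectively rationalizable and, for every subjectively rationalizable memoryless deterministic P2 strategy $\pi_2$, every path from $s$ generated by $(\pi_1,\pi_2)$ in the true game $\mathcal{G}^1_{X,Y}$ visits $X\cup Y$ within finitely many steps. $\mathrm{DSWin}_1(X,Y)$ is the set of states at which P1 has a stealthy deceptive sure winning strategy. *)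

(* Defs.v *)
From mathcomp Require Import all_boot.
From Stdlib Require Import ClassicalEpsilon.
Set Implicit Arguments. Unset Strict Implicit. Unset Printing Implicit Defensive.

Section Game.
(* S : states; p1 s = true iff s is a P1 state (S_1), otherwise s in S_2.
   A : actions; A1 a = true iff a is a P1 action.
   T : partial deterministic transition function (None = not enabled). *)
Variables (S A : finType) (p1 : pred S) (A1 : pred A) (T : S -> A -> option S).

Definition enabled (s : S) (a : A) : bool := T s a != None.

Definition is_game (F : {set S}) : Prop :=
  [/\ (forall s, exists a, enabled s a),
      (forall s a, enabled s a -> p1 s = A1 a)
    & (forall f a t, f \in F -> T f a = Some t -> t = f)].

Definition succ_in (s : S) (a : A) (Z : {set S}) : bool :=
  if T s a is Some t then t \in Z else false.

Definition attr_step (Z : {set S}) : {set S} :=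
  Z :|: [set s | p1 s & [forall a, enabled s a ==> succ_in s a Z]]
    :|: [set s | ~~ p1 s & [exists a, succ_in s a Z]].

Definition Zk (R : {set S}) (k : nat) : {set S} := iter k attr_step R.

Definition win2 (R : {set S}) (s : S) : Prop := exists k, s \in Zk R k.

(* rank_{G,R}(s); None stands for infinity *)
Definition rank (R : {set S}) (s : S) : option nat :=
  match excluded_middle_informative (exists k, s \in Zk R k) with
  | left H => Some (ex_minn H)
  | right _ => None
  end.

Definition rank_lt (x y : option nat) : Prop :=
  match x, y with
  | Some m, Some n => (m < n)%N
  | Some _, None => True
  | None, _ => False
  end.

(* a \in SRActs_{X,Y}(q) (does not depend on X); F is P2's goal *)
Definition SRAct (F Y : {set S}) (q : S) (a : A) : Prop :=
  enabled q a /\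
  ((~~ p1 q /\ win2 F q /\ q \notin F :|: Y) ->
     match T q a with
     | Some t => rank_lt (rank (F :|: Y) t) (rank (F :|: Y) q)
     | None => False
     end).

(* memoryless deterministic strategies: S -> A, only relevant at own states *)
Definition sr1 (F Y : {set S}) (pi1 : S -> A) : Prop :=
  forall q, p1 q -> SRAct F Y q (pi1 q).
Definition sr2 (F Y : {set S}) (pi2 : S -> A) : Prop :=
  forall q, ~~ p1 q -> SRAct F Y q (pi2 q).

Definition true_step (X Y : {set S}) (q : S) (a : A) : option S :=
  if q \in X :|: Y then Some q else T q a.

Definition play (X Y : {set S}) (pi1 pi2 : S -> A) (s : S) (p : nat -> S) : Prop :=
  p 0 = s /\
  forall n, true_step X Y (p n) (if p1 (p n) then pi1 (p n) else pi2 (p n))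
            = Some (p n.+1).

Definition dswin1 (F X Y : {set S}) (s : S) : Prop :=
  exists pi1, sr1 F Y pi1 /\
    forall pi2, sr2 F Y pi2 ->
      forall p, play X Y pi1 pi2 s p -> exists n, p n \in X :|: Y.

End Game.

(* Main.v *)
Require Import Defs.
From mathcomp Require Import all_boot.
From Stdlib Require Import ClassicalEpsilon Classical.
Set Implicit Arguments. Unset Strict Implicit. Unset Printing Implicit Defensive.

Lemma attr_ext (S A : finType) (p1 : pred S) (T : S -> A -> option S) (Z : {set S}) :
  Z \subset attr_step p1 T Z.
Proof. by rewrite /attr_step -setUA subsetUl. Qed.

Lemma Zk_mono (S A : finType) (p1 : pred S) (T : S -> A -> option S) R k m :
  k <= m -> Zk p1 T R k \subset Zk p1 T R m.
Proof.
move=> /subnK <-; elim: (m - k) => [|n IH] //=.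
 apply: subset_trans IH _; exact: attr_ext.
Qed.

Lemma attr_monoR (S A : finType) (p1 : pred S) (T : S -> A -> option S) (R R' : {set S}) :
  R \subset R' -> attr_step p1 T R \subset attr_step p1 T R'.
Proof.
move=> sub; apply/subsetP => x; rewrite /attr_step !inE.
have si : forall a, succ_in T x a R -> succ_in T x a R'.
  by move=> a; rewrite /succ_in; case: (T x a) => // t; apply: (subsetP sub).
case/orP=> [/orP [H|/andP [H1 /forallP H2]]|/andP [H1 /existsP [a Ha]]].
- by rewrite (subsetP sub).
- apply/orP; left; apply/orP; right; rewrite H1 /=; apply/forallP => a.
  by apply/implyP => /(implyP (H2 a)); apply: si.
- by apply/orP; right; rewrite H1 /=; apply/existsP; exists a; apply: si.
Qed.

Lemma Zk_monoR (S A : finType) (p1 : pred S) (T : S -> A -> option S) (R R' : {set S}) k :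
  R \subset R' -> Zk p1 T R k \subset Zk p1 T R' k.
Proof. move=> sub; elim: k => //= k IH; exact: attr_monoR. Qed.

Lemma Zk_add (S A : finType) (p1 : pred S) (T : S -> A -> option S) R a b :
  Zk p1 T R (b + a) = Zk p1 T (Zk p1 T R a) b.
Proof. by rewrite /Zk iterD. Qed.

Lemma rank_some (S A : finType) (p1 : pred S) (T : S -> A -> option S) R q k :
  rank p1 T R q = Some k -> q \in Zk p1 T R k /\ forall j, q \in Zk p1 T R j -> k <= j.
Proof.
rewrite /rank; case: excluded_middle_informative => // H [<-].
case: ex_minnP => m Hm Hmin; split => // j Hj; exact: Hmin.
Qed.

Lemma rank_in (S A : finType) (p1 : pred S) (T : S -> A -> option S) R q m :
  q \in Zk p1 T R m -> exists k, rank p1 T R q = Some k /\ k <= m.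
Proof.
move=> Hm; case E: (rank p1 T R q) => [k|].
  by exists k; split => //; case: (rank_some E) => _; apply.
move: E; rewrite /rank; case: excluded_middle_informative => // H _.
by exfalso; apply: H; exists m.
Qed.

Lemma rank_none (S A : finType) (p1 : pred S) (T : S -> A -> option S) (R : {set S}) q :
  rank p1 T R q = None -> ~ win2 p1 T R q.
Proof. by move=> E [m Hm]; case: (rank_in Hm) => k [E' _]; rewrite E in E'. Qed.

Lemma attr_P1 (S A : finType) (p1 : pred S) (T : S -> A -> option S) (R : {set S}) k q a t :
  p1 q -> q \in Zk p1 T R k.+1 -> q \notin Zk p1 T R k -> T q a = Some t ->
  t \in Zk p1 T R k.
Proof.
move=> P Hq Hn Ht; move: Hq; rewrite /= /attr_step !inE (negbTE Hn) P /=.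
case/orP => [/forallP H|//]; have := H a; rewrite /enabled /succ_in Ht /=; exact.
Qed.

Lemma attr_P2 (S A : finType) (p1 : pred S) (T : S -> A -> option S) (R : {set S}) k q :
  ~~ p1 q -> q \in Zk p1 T R k.+1 -> q \notin Zk p1 T R k ->
  exists a t, T q a = Some t /\ t \in Zk p1 T R k.
Proof.
move=> P Hq Hn; move: Hq; rewrite /= /attr_step !inE (negbTE Hn) (negbTE P) /=.
case/existsP => a; rewrite /succ_in; case E: (T q a) => [t|] // Ht.
by exists a, t.
Qed.

Lemma rank_P1 (S A : finType) (p1 : pred S) (T : S -> A -> option S) (R : {set S}) k q a t :
  p1 q -> rank p1 T R q = Some k.+1 -> T q a = Some t ->
  exists i, rank p1 T R t = Some i /\ i <= k.
Proof.
move=> P /rank_some [Hq Hmin] Ht.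
have Hn : q \notin Zk p1 T R k by apply/negP => /Hmin; rewrite ltnn.
exact: (rank_in (attr_P1 P Hq Hn Ht)).
Qed.

Lemma rank_P2 (S A : finType) (p1 : pred S) (T : S -> A -> option S) (R : {set S}) k q :
  ~~ p1 q -> rank p1 T R q = Some k.+1 ->
  exists a t i, T q a = Some t /\ rank p1 T R t = Some i /\ i <= k.
Proof.
move=> P /rank_some [Hq Hmin].
have Hn : q \notin Zk p1 T R k by apply/negP => /Hmin; rewrite ltnn.
case: (attr_P2 P Hq Hn) => a [t [Ht Htk]].
case: (rank_in Htk) => i [Hi Hik]; by exists a, t, i.
Qed.

Lemma rank0 (S A : finType) (p1 : pred S) (T : S -> A -> option S) (R : {set S}) q :
  rank p1 T R q = Some 0 -> q \in R.
Proof. by case/rank_some. Qed.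

Lemma rank_inR (S A : finType) (p1 : pred S) (T : S -> A -> option S) (R : {set S}) q :
  q \in R -> rank p1 T R q = Some 0.
Proof. move=> H; have Hm : q \in Zk p1 T R 0 by []. by case: (rank_in Hm) => k [-> ]; rewrite leqn0 => /eqP ->. Qed.

Lemma win2_FZ (S A : finType) (p1 : pred S) (T : S -> A -> option S) (F Z : {set S}) q :
  (forall s, s \in Z -> win2 p1 T F s) -> win2 p1 T (F :|: Z) q -> win2 p1 T F q.
Proof.
move=> HZ [m Hm].
pose kz z := if rank p1 T F z is Some k then k else 0.
pose K := \max_(z in Z) kz z.
have sub : F :|: Z \subset Zk p1 T F K.
  apply/subsetP => x; rewrite inE => /orP [Hx|Hx].
    by apply: (subsetP (Zk_mono p1 T F (leq0n K))).
  have [k Hk] := HZ x Hx; have [i [Hi _]] := rank_in Hk.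
  have := (rank_some Hi).1; apply: (subsetP (Zk_mono _ _ _ _)).
  by rewrite /K (bigmax_sup x) // /kz Hi.
exists (m + K); rewrite Zk_add; exact: (subsetP (Zk_monoR _ _ m sub)).
Qed.

Lemma win2_mono (S A : finType) (p1 : pred S) (T : S -> A -> option S) (F Z : {set S}) q :
  win2 p1 T F q -> win2 p1 T (F :|: Z) q.
Proof. by move=> [m Hm]; exists m; apply: (subsetP (Zk_monoR _ _ m (subsetUl F Z))). Qed.

Inductive Ereg (S A : finType) (p1 : pred S) (T : S -> A -> option S) (F Z : {set S}) : S -> Prop :=
| E_F q : q \in F -> Ereg p1 T F Z q
| E_1 q : q \notin Z -> win2 p1 T F q -> p1 q ->
    (forall a t, T q a = Some t -> Ereg p1 T F Z t) -> Ereg p1 T F Z q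
| E_2 q a t : q \notin Z -> win2 p1 T F q -> ~~ p1 q -> T q a = Some t ->
    rank_lt (rank p1 T (F :|: Z) t) (rank p1 T (F :|: Z) q) -> Ereg p1 T F Z t ->
    Ereg p1 T F Z q.

Lemma E_inv (S A : finType) (p1 : pred S) (T : S -> A -> option S) (F Z : {set S}) q :
  Ereg p1 T F Z q ->
  q \in F \/
  (q \notin Z /\ win2 p1 T F q /\ p1 q /\ (forall a t, T q a = Some t -> Ereg p1 T F Z t)) \/
  (q \notin Z /\ win2 p1 T F q /\ ~~ p1 q /\ exists a t, T q a = Some t /\
    rank_lt (rank p1 T (F :|: Z) t) (rank p1 T (F :|: Z) q) /\ Ereg p1 T F Z t).
Proof.
case=> [q' H|q' H1 H2 H3 H4|q' a t H1 H2 H3 H4 H5 H6]; [by left|right; left; tauto|].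
by right; right; do 3 (split => //); exists a, t.
Qed.

Lemma in_attr_P1 (S A : finType) (p1 : pred S) (T : S -> A -> option S) (R : {set S}) q :
  p1 q -> (forall a t, T q a = Some t -> t \in R) -> q \in attr_step p1 T R.
Proof.
move=> P H; rewrite /attr_step !inE P /=; apply/orP; left; apply/orP; right.
apply/forallP => a; apply/implyP; rewrite /enabled /succ_in.
by case E: (T q a) => [t|] // _; apply: H E.
Qed.

Lemma in_attr_P2 (S A : finType) (p1 : pred S) (T : S -> A -> option S) (R : {set S}) q a t :
  ~~ p1 q -> T q a = Some t -> t \in R -> q \in attr_step p1 T R.
Proof.
move=> P E H; rewrite /attr_step !inE P /=; apply/orP; right.
by apply/existsP; exists a; rewrite /succ_in E.
Qed.

Lemma E_notZ (S A : finType) (p1 : pred S) (T : S -> A -> option S) (F Z : {set S}) q :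
  (forall s, s \in Z -> s \notin F) -> Ereg p1 T F Z q -> q \notin Z.
Proof.
move=> HZ; case=> // q' H; apply/negP => /HZ; by rewrite H.
Qed.

Lemma E_rank (S A : finType) (p1 : pred S) (T : S -> A -> option S) (F Z : {set S}) q :
  Ereg p1 T F Z q ->
  exists j, rank p1 T (F :|: Z) q = Some j /\ q \in Zk p1 T F j.
Proof.
elim=> {q} [q H|q nZ W P _ IH|q a t nZ W P Ht Hlt _ IH].
- by exists 0; split => //; apply: rank_inR; rewrite inE H.
- have [m Hm] := win2_mono Z W; have [j [Hj _]] := rank_in Hm.
  exists j; split => //; case: j Hj => [|j] Hj.
    by move: (rank0 Hj); rewrite inE (negbTE nZ) orbF.
  apply: in_attr_P1 => // b u Hu.
  have [i [Hi Hij]] := rank_P1 P Hj Hu.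
  have [i' [Hi' Hu']] := IH b u Hu; rewrite Hi in Hi'; case: Hi' => <- in Hu'.
  exact: (subsetP (Zk_mono p1 T F Hij)).
- have [i [Hi Ht']] := IH; rewrite Hi in Hlt.
  case E: (rank p1 T (F :|: Z) q) Hlt => [j|] //= Hij.
  exists j; split; first by [].
  case: j Hij E => [|j] // Hij E.
  rewrite ltnS in Hij; apply: (in_attr_P2 P Ht); exact: (subsetP (Zk_mono p1 T F Hij)).
by exfalso; apply: (rank_none E); apply: win2_mono.
Qed.

Lemma rho_ge_r (S A : finType) (p1 : pred S) (T : S -> A -> option S) (F Z : {set S}) q m :
  rank p1 T F q = Some m -> exists j, rank p1 T (F :|: Z) q = Some j /\ j <= m.
Proof.
move=> /rank_some [Hm _]; apply: rank_in.
exact: (subsetP (Zk_monoR _ _ m (subsetUl F Z))).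
Qed.

Definition pickP (A : Type) (P : A -> Prop) (d : A) : A :=
  match excluded_middle_informative (exists a, P a) with
  | left H => proj1_sig (constructive_indefinite_description _ H)
  | right _ => d
  end.

Lemma pickP_spec (A : Type) (P : A -> Prop) (d : A) : (exists a, P a) -> P (pickP P d).
Proof.
move=> H; rewrite /pickP; case: excluded_middle_informative => // H'.
exact: proj2_sig.
Qed.

Fixpoint run (S : Type) (step : S -> S) (s : S) (n : nat) : S :=
  match n with 0 => s | n'.+1 => step (run step s n') end.

Theorem theorem2 (S A : finType) (p1 : pred S) (A1 : pred A)
  (T : S -> A -> option S) (s0 : S) (F : {set S}) :
  is_game p1 A1 T F ->
  forall Z : {set S},
    (forall s, s \in Z -> win2 p1 T F s /\ s \notin F) ->
    forall s, dswin1 p1 T F Z set0 s -> dswin1 p1 T F set0 Z s.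
Proof.
move=> [Hen _ Hsink] Z HZ s [pi1 [Hsr1 Hwin]].
have HZw : forall q, q \in Z -> win2 p1 T F q by move=> q /HZ [].
have HZF : forall q, q \in Z -> q \notin F by move=> q /HZ [].
pose E := Ereg p1 T F Z.
pose Good1 q a := enabled T q a /\
  (win2 p1 T F q -> q \notin F -> q \notin Z -> ~ E q -> exists t, T q a = Some t /\ ~ E t) /\
  (~ (win2 p1 T F q /\ q \notin F /\ q \notin Z /\ ~ E q) -> a = pi1 q).
pose pi1' q := pickP (Good1 q) (pi1 q).
have G1 : forall q, p1 q -> Good1 q (pi1' q).
  move=> q Pq; apply: pickP_spec.
  case: (classic (win2 p1 T F q /\ q \notin F /\ q \notin Z /\ ~ E q)) => [[W [nF [nZ nE]]]|Hc].
    have : ~ forall a t, T q a = Some t -> E t by move=> H; apply: nE; apply: E_1.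
    move=> Hn; apply not_all_ex_not in Hn; destruct Hn as [a Hn].
    apply not_all_ex_not in Hn; destruct Hn as [t Hn].
    apply imply_to_and in Hn; destruct Hn as [Ht nEt].
    exists a; split; first by rewrite /enabled Ht.
    by split; [move=> *; exists t | move=> H; exfalso; apply: H].
  exists (pi1 q); split; first exact: (Hsr1 q Pq).1.
  by split => // W nF nZ nE; exfalso; apply: Hc.
exists pi1'; split.
  move=> q Pq; split; first exact: (G1 q Pq).1.
  by move=> [/negP].
move=> pi2' Hsr2' p [Hp0 Hpstep].
apply: NNPP => Hno.
have nZ : forall n, p n \notin Z.
  by move=> n; apply/negP => Hn; apply: Hno; exists n; rewrite inE Hn orbT.
have Hstep : forall n, T (p n) (if p1 (p n) then pi1' (p n) else pi2' (p n)) = Some (p n.+1).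
  by move=> n; have := Hpstep n; rewrite /true_step inE in_set0 (negbTE (nZ n)).
case: (classic (exists n, win2 p1 T F (p n) /\ ~ E (p n))) => [[n0 [W0 nE0]]|Hb].
  suff Hind : forall j k n, k <= j -> rank p1 T (F :|: Z) (p n) = Some k ->
      win2 p1 T F (p n) -> ~ E (p n) -> False.
    have [m Hm] := win2_mono Z W0; have [k [Hk _]] := rank_in Hm.
    exact: (Hind k k n0 (leqnn k) Hk W0 nE0).
  elim=> [|j IH] k n Hkj Hk W nE.
    move: Hkj; rewrite leqn0 => /eqP Hk0; rewrite Hk0 in Hk.
    move: (rank0 Hk); rewrite inE => /orP [H|H]; first by apply: nE; apply: E_F.
    by move: (nZ n); rewrite H.
  have nF : p n \notin F by apply/negP => H; apply: nE; apply: E_F.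
  case: k Hkj Hk => [|k] Hkj Hk.
    move: (rank0 Hk); rewrite inE (negbTE nF) /= => H.
    by move: (nZ n); rewrite H.
  have Hs := Hstep n.
  case Pq: (p1 (p n)) Hs => Hs.
    have [t [Ht nEt]] := (G1 _ Pq).2.1 W nF (nZ n) nE.
    rewrite Hs in Ht; case: Ht => Ht; subst t.
    have [i [Hi Hik]] := rank_P1 Pq Hk Hs.
    apply: (IH i n.+1) => //; first exact: leq_trans Hik Hkj.
    apply: (win2_FZ HZw); exists i; exact: (rank_some Hi).1.
  have [_ H] := Hsr2' (p n) (negbT Pq).
  have := H (conj (negbT Pq) (conj W _)); rewrite Hs.
  move=> H'; have H'' := H' ltac:(by rewrite inE negb_or nF nZ).
  rewrite Hk in H''.
  case Ei: (rank p1 T (F :|: Z) (p n.+1)) H'' => [i|] //= Hik.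
  apply: (IH i n.+1) => //; first exact: leq_trans Hik Hkj.
  - apply: (win2_FZ HZw); exists i; exact: (rank_some Ei).1.
  - move=> Et; apply: nE; apply: (E_2 (nZ n) W (negbT Pq) Hs) => //.
    by rewrite Ei Hk.
have Hb' : forall n, win2 p1 T F (p n) -> E (p n).
  move=> n W; apply: NNPP => nE; apply: Hb; by exists n.
pose Good2 q a := enabled T q a /\
  (win2 p1 T F q -> q \notin F -> ~~ p1 q -> exists t, T q a = Some t /\
      rank_lt (rank p1 T F t) (rank p1 T F q) /\ (E q -> E t)) /\
  (~~ p1 q -> ~ win2 p1 T F q -> a = pi2' q).
pose pi2 q := pickP (Good2 q) (pi2' q).
have G2 : forall q, Good2 q (pi2 q).
  move=> q; apply: pickP_spec.
  have [a0 Ha0] := Hen q.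
  case Pq: (p1 q).
    by exists a0; split => //; split => [_ _|]; rewrite Pq.
  case: (classic (win2 p1 T F q)) => W; last first.
    exists (pi2' q); split; first exact: (Hsr2' q (negbT Pq)).1.
    by split => // W'; exfalso; apply: W.
  case: (boolP (q \in F)) => inF.
    by exists a0; split => //; split => // _ /negP.
  case: (classic (E q)) => Eq.
    case: (E_inv Eq) => [H|[[_ [_ [H _]]]|[_ [_ [_ [a [t [Ht [Hlt Et]]]]]]]]].
    - by rewrite H in inF.
    - by rewrite H in Pq.
    exists a; split; first by rewrite /enabled Ht.
    split => // _ _ _; exists t; split => //; split; last by [].
    have [j [Hj Htj]] := E_rank Et.
    have [i [Hi Hij]] := rank_in Htj.
    have [m Hm] := W; have [m' [Hm' _]] := rank_in Hm.
    have [j' [Hj' Hjm]] := rho_ge_r Z Hm'.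
    rewrite Hj Hj' /= in Hlt; rewrite Hi Hm' /=.
    exact: leq_ltn_trans Hij (leq_trans Hlt Hjm).
  have [m Hm] := W; have [m' [Hm' _]] := rank_in Hm.
  case: m' Hm' => [|m'] Hm'.
    by move: (rank0 Hm') inF => ->.
  have [a [t [i [Ht [Hi Him]]]]] := rank_P2 (negbT Pq) Hm'.
  exists a; split; first by rewrite /enabled Ht.
  split => // _ _ _; exists t; split => //; split; last by move=> /Eq.
  by rewrite Hi Hm'.
have Hsr2 : sr2 p1 T F set0 pi2.
  move=> q Pq; split; first exact: (G2 q).1.
  rewrite setU0 => -[_ [W nF]].
  have [t [Ht [Hlt _]]] := (G2 q).2.1 W nF Pq.
  by rewrite Ht.
have Hact : forall q, enabled T q (if p1 q then pi1 q else pi2 q).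
  move=> q; case Pq: (p1 q); first exact: (Hsr1 q Pq).1.
  exact: (G2 q).1.
pose step q := odflt q (true_step T Z set0 q (if p1 q then pi1 q else pi2 q)).
pose pp := run step s.
have Hplay : play p1 T Z set0 pi1 pi2 s pp.
  split => // n; have -> : pp n.+1 = step (pp n) by [].
  rewrite /step; case Et: (true_step T Z set0 (pp n) _) => [u|] //; exfalso.
  move: Et; rewrite /true_step; case: (pp n \in Z :|: set0) => // Et.
  by move: (Hact (pp n)); rewrite /enabled Et.
have Inv : forall n, (pp n = p n /\ ~ win2 p1 T F (p n)) \/ E (pp n).
  elim=> [|n IH].
    case: (classic (win2 p1 T F (p 0))) => W.
      by right; rewrite /pp /= -Hp0; apply: Hb'.
    by left; split; [rewrite Hp0|].
  case: IH => [[Eq nW]|Eq].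
    have Hs := Hstep n.
    have -> : pp n.+1 = p n.+1.
      rewrite /pp /= -/pp Eq /step /true_step inE in_set0 (negbTE (nZ n)) /=.
      case Pq: (p1 (p n)) Hs => Hs.
        have <- : pi1' (p n) = pi1 (p n) by apply: (G1 _ Pq).2.2 => -[].
        by rewrite Hs.
      have <- : pi2' (p n) = pi2 (p n) by symmetry; apply: (G2 _).2.2 => //; rewrite Pq.
      by rewrite Hs.
    case: (classic (win2 p1 T F (p n.+1))) => W; first by right; apply: Hb'.
    by left; split.
  right; rewrite /pp /= -/pp /step /true_step inE in_set0 (negbTE (E_notZ HZF Eq)) /=.
  set q := pp n in Eq *.
  case Ht: (T q _) => [t|] //=.
  case: (boolP (q \in F)) => inF.
    by rewrite (Hsink _ _ _ inF Ht).
  case: (E_inv Eq) => [H|[[_ [W [P H]]]|[_ [W [P _]]]]].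
  - by rewrite H in inF.
  - by rewrite P in Ht; apply: H Ht.
  rewrite (negbTE P) in Ht.
  have [t' [Ht' [_ H]]] := (G2 q).2.1 W inF P.
  by rewrite Ht in Ht'; case: Ht' => ->; apply: H.
have [n Hn] := Hwin pi2 Hsr2 pp Hplay.
rewrite setU0 in Hn.
case: (Inv n) => [[Eq _]|Eq].
  by move: (nZ n); rewrite -Eq Hn.
by move: (E_notZ HZF Eq); rewrite Hn.
Qed.
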